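(* Let $(\Omega,\mathcal{F},P)$ be a probability space, $\mathcal{X}$ a measurable space, $X:\Omega\to\mathcal{X}$ measurable, $u:\mathcal{X}\to\mathbb{R}$ measurable with $\mathbb{E}[u(X)]$ finite, and $\beta\ge 0$. Let $\mathbb{E}_\beta[u(X)]$ denote the unique $v\in\mathbb{R}$ with $\mathbb{E}[(u(X)-v)^+]=(1+\beta)\mathbb{E}[(v-u(X))^+]$. Let $$\mathcal{Q}_\beta=\left\{Q:\ Q\ll P,\ \frac{\mathrm{d}Q}{\mathrm{d}P}=\frac{1_{D^c}+(1+\beta)1_D}{1+\beta P(D)}\text{ for some }D\in\mathcal{F}\right\}.$$ Then $$\mathbb{E}_\beta[u(X)]=\min_{Q\in\mathcal{Q}_\beta}\mathbb{E}^Q[u(X)],$$ and the minimum is attained at $Q^*$ with $\dfrac{\mathrm{d}Q^*}{\mathrm{d}P}=\dfrac{1_{D_X^c}+(1+\beta)1_{D_X}}{1+\beta P(D_X)}$, where $D_X=\{\omega: u(X(\omega))<\mathbb{E}_\beta[u(X)]\}$.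
   Context: $s^+=\max\{s,0\}$; $\mathbb{E}^Q$ denotes expectation under $Q$. *)

(* Defs.v *)
From HB Require Import structures.
From mathcomp Require Import all_boot all_order all_algebra.
From mathcomp Require Import all_classical all_reals all_analysis.
Set Implicit Arguments. Unset Strict Implicit. Unset Printing Implicit Defensive.
Import Order.TTheory GRing.Theory Num.Theory.
Local Open Scope classical_set_scope.
Local Open Scope ring_scope.

Definition pospart {R : realType} (s : R) : R := Num.max s 0.

Definition is_Ebeta d (Omega : measurableType d) (R : realType)
  (P : probability Omega R) (Y : Omega -> R) (beta v : R) : Prop :=
  (\int[P]_w (pospart (Y w - v))%:E = (1 + beta)%:E * \int[P]_w (pospart (v - Y w))%:E)%E.

Definition Ebeta d (Omega : measurableType d) (R : realType)
  (P : probability Omega R) (Y : Omega -> R) (beta : R) : R :=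
  xget 0 [set v | is_Ebeta P Y beta v].

Definition dens d (Omega : measurableType d) (R : realType)
  (P : probability Omega R) (beta : R) (D : set Omega) (w : Omega) : R :=
  (\1_(~` D) w + (1 + beta) * \1_D w) / (1 + beta * fine (P D)).

Definition has_density d (Omega : measurableType d) (R : realType)
  (P : probability Omega R) (Q : {measure set Omega -> \bar R}) (f : Omega -> R) : Prop :=
  forall A, measurable A -> Q A = (\int[P]_(w in A) (f w)%:E)%E.

Definition Qbeta d (Omega : measurableType d) (R : realType)
  (P : probability Omega R) (beta : R) : set {measure set Omega -> \bar R} :=
  [set Q : {measure set Omega -> \bar R} | Q `<< P /\ exists D, measurable D /\ has_density P Q (dens P beta D)].

(* Main.v *)
Require Import Defs.
From HB Require Import structures.
From mathcomp Require Import all_boot all_order all_algebra.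
From mathcomp Require Import all_classical all_reals all_analysis.
From mathcomp Require Import measurable_realfun.
From mathcomp Require Import lra ring.
Import Order.TTheory GRing.Theory Num.Theory.
Import numFieldNormedType.Exports.
Local Open Scope classical_set_scope.
Local Open Scope ring_scope.

Lemma int_mrestr d (T : measurableType d) (R : realType)
  (mu : {measure set T -> \bar R}) (F : set T) (mF : measurable F)
  (h : T -> \bar R) : measurable_fun setT h -> (forall x, 0 <= h x)%E ->
  (\int[mrestr mu mF]_x h x = \int[mu]_(x in F) h x)%E.
Proof.
move=> mh h0.
have mFc : measurable (~` F) by exact: measurableC.
rewrite [RHS](eq_measure_integral (mrestr mu mF)); last first.
  by move=> A mA AF; change (mu A = mu (A `&` F)); rewrite setIidl.
rewrite -(setUv F) ge0_integral_setU//; last 2 first.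
- by rewrite setUv.
- by rewrite disj_set2E setICr.
rewrite [X in (_ + X)%E](eq_measure_integral (@mzero d T R)).
  by rewrite integral_measure_zero adde0.
move=> A mA AF; change (mu (A `&` F) = 0%E).
suff -> : A `&` F = set0 by rewrite measure0.
by apply/seteqP; split => // x [/AF].
Qed.

Lemma int_in_indic d (T : measurableType d) (R : realType)
  (mu : {measure set T -> \bar R}) (F : set T) (h : T -> \bar R) :
  (\int[mu]_(x in F) h x = \int[mu]_x (h x * (\1_F x)%:E))%E.
Proof.
rewrite integral_mkcond; apply: eq_integral => x _.
rewrite /patch indicE; case: ifPn => _; first by rewrite mule1.
by rewrite mule0.
Qed.

Lemma dens_c0 {d} {Omega : measurableType d} {R : realType}
  (P : probability Omega R) {beta : R} (D : set Omega) :
  0 <= beta -> 0 <= (1 + beta * fine (P D))^-1.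
Proof.
move=> b0; rewrite invr_ge0 addr_ge0 // mulr_ge0 //.
by apply: fine_ge0; exact: measure_ge0.
Qed.

Lemma dens_bc0 {d} {Omega : measurableType d} {R : realType}
  (P : probability Omega R) {beta : R} (D : set Omega) :
  0 <= beta -> 0 <= (1 + beta) * (1 + beta * fine (P D))^-1.
Proof. by move=> b0; rewrite mulr_ge0 ?dens_c0 // addr_ge0. Qed.

Definition Mdens {d} {Omega : measurableType d} {R : realType}
  (P : probability Omega R) {beta : R} {D : set Omega} (mD : measurable D)
  (b0 : 0 <= beta) : {measure set Omega -> \bar R} :=
  measure_add (mscale (NngNum (dens_c0 P D b0)) (mrestr P (measurableC mD)))
              (mscale (NngNum (dens_bc0 P D b0)) (mrestr P mD)).

Lemma Mdens_key {d} {Omega : measurableType d} {R : realType}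
  (P : probability Omega R) {beta : R} {D : set Omega} (mD : measurable D)
  (b0 : 0 <= beta) (h : Omega -> \bar R) :
  measurable_fun setT h -> (forall x, 0 <= h x)%E ->
  (\int[Mdens P mD b0]_x h x = \int[P]_x (h x * (dens P beta D x)%:E))%E.
Proof.
move=> mh h0.
set c := (1 + beta * fine (P D))^-1.
have c0 : 0 <= c := dens_c0 P D b0.
have bc0 : 0 <= (1 + beta) * c := dens_bc0 P D b0.
have mDc : measurable (~` D) by exact: measurableC.
have densE x : dens P beta D x = c * \1_(~` D) x + (1 + beta) * c * \1_D x.
  by rewrite /dens -/c mulrDl mulrC; congr (_ + _); rewrite mulrAC.
have mi (F : set Omega) : measurable F -> measurable_fun setT (fun x => (\1_F x)%:E : \bar R).
  by move=> mF; apply/measurable_EFinP; exact: measurable_indic.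
rewrite /Mdens ge0_integral_measure_add //.
rewrite (ge0_integral_mscale _ measurableT) //.
rewrite (ge0_integral_mscale _ measurableT) //.
rewrite (@int_mrestr _ _ _ P _ (measurableC mD)) // (@int_mrestr _ _ _ P _ mD) // /=.
rewrite (@int_in_indic _ _ _ P (~` D)) (@int_in_indic _ _ _ P D).
rewrite -(ge0_integralZl_EFin _ measurableT); [|by move=> x _; rewrite mule_ge0 // lee_fin indicE|exact: (emeasurable_funM mh (mi _ mDc))|exact: c0].
rewrite -(ge0_integralZl_EFin _ measurableT); [|by move=> x _; rewrite mule_ge0 // lee_fin indicE|exact: (emeasurable_funM mh (mi _ mD))|exact: bc0].
rewrite -ge0_integralD //; [|
  by move=> x _; rewrite mule_ge0 // ?lee_fin // mule_ge0 // lee_fin indicE|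
  by apply: measurable_funeM; exact: (emeasurable_funM mh (mi _ mDc))|
  by move=> x _; rewrite mule_ge0 // ?lee_fin // mule_ge0 // lee_fin indicE|
  by apply: measurable_funeM; exact: (emeasurable_funM mh (mi _ mD))].
apply: eq_integral => x _; rewrite densE EFinD !EFinM.
rewrite ge0_muleDr; first by congr (_ + _); exact: muleCA.
  by rewrite mule_ge0 // lee_fin indicE.
by rewrite !mule_ge0 // lee_fin ?indicE // addr_ge0.
Qed.

Lemma Mdens_density {d} {Omega : measurableType d} {R : realType}
  (P : probability Omega R) {beta : R} {D : set Omega} (mD : measurable D)
  (b0 : 0 <= beta) : has_density P (Mdens P mD b0) (dens P beta D).
Proof.
move=> A mA; rewrite int_in_indic.
have mi : measurable_fun setT (fun x => (\1_A x)%:E : \bar R).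
  by apply/measurable_EFinP; exact: measurable_indic.
have := Mdens_key P mD b0 _ mi (fun x => ltac:(by rewrite lee_fin indicE)).
rewrite integral_indic // setIT => HM; apply: eq_trans HM _.
by apply: eq_integral => x _; rewrite muleC.
Qed.

Lemma Mdens_ac {d} {Omega : measurableType d} {R : realType}
  (P : probability Omega R) {beta : R} {D : set Omega} (mD : measurable D)
  (b0 : 0 <= beta) : Mdens P mD b0 `<< P.
Proof.
apply/null_content_dominatesP => A mA PA0.
rewrite /Mdens /= /msum /= !big_ord_recl big_ord0 /= /mscale /= /mrestr /=.
have mDc : measurable (~` D) by exact: measurableC.
rewrite (@subset_measure0 _ _ _ P (A `&` ~` D) A) //; last exact: measurableI.
rewrite (@subset_measure0 _ _ _ P (A `&` D) A) //; last exact: measurableI.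
by rewrite !mule0 !adde0.
Qed.

Lemma dens_change d (Omega : measurableType d) (R : realType)
  (P : probability Omega R) (beta : R) (D : set Omega) (mD : measurable D)
  (Q : {measure set Omega -> \bar R}) :
  0 <= beta -> has_density P Q (dens P beta D) ->
  forall h : Omega -> \bar R, measurable_fun setT h -> (forall x, 0 <= h x)%E ->
  (\int[Q]_x h x = \int[P]_x (h x * (dens P beta D x)%:E))%E.
Proof.
move=> b0 hQ h mh h0.
rewrite (eq_measure_integral (Mdens P mD b0)); last first.
  by move=> A mA _; rewrite hQ // Mdens_density.
exact: Mdens_key.
Qed.

Lemma epos_mul (R : realType) (y c : R) : 0 <= c ->
  ((maxe (y * c)%:E 0) = maxe y%:E 0 * c%:E)%E.
Proof.
move=> c0; have [y0|y0] := leP 0 y.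
  by rewrite !max_l ?lee_fin ?mulr_ge0 // EFinM.
rewrite !max_r ?lee_fin ?mul0e //; first exact: ltW.
by rewrite mulr_le0_ge0 // ltW.
Qed.
Lemma eneg_mul (R : realType) (y c : R) : 0 <= c ->
  ((maxe (- (y * c)%:E) 0) = maxe (- y%:E) 0 * c%:E)%E.
Proof.
move=> c0; rewrite -!EFinN -mulNr; exact: epos_mul.
Qed.

Lemma dens_ge0 d (Omega : measurableType d) (R : realType)
  (P : probability Omega R) (beta : R) (D : set Omega) x :
  0 <= beta -> 0 <= dens P beta D x.
Proof.
move=> b0; rewrite /dens divr_ge0 //.
  by rewrite addr_ge0 // ?mulr_ge0 ?addr_ge0 // indicE.
by rewrite addr_ge0 // mulr_ge0 // fine_ge0 // measure_ge0.
Qed.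

Lemma dens_changeY d (Omega : measurableType d) (R : realType)
  (P : probability Omega R) (beta : R) (D : set Omega) (mD : measurable D)
  (Q : {measure set Omega -> \bar R}) (Y : Omega -> R) :
  0 <= beta -> has_density P Q (dens P beta D) -> measurable_fun setT Y ->
  (\int[Q]_x (Y x)%:E = \int[P]_x ((Y x * dens P beta D x)%:E))%E.
Proof.
move=> b0 hQ mY.
have mYE : measurable_fun setT (fun x => (Y x)%:E : \bar R) by exact/measurable_EFinP.
rewrite integralE [RHS]integralE.
rewrite (@dens_change _ _ _ P beta D mD Q b0 hQ); last 2 first.
- exact: measurable_funepos.
- by move=> x; rewrite funepos_ge0.
rewrite (@dens_change _ _ _ P beta D mD Q b0 hQ); last 2 first.
- exact: measurable_funeneg.
- by move=> x; rewrite funeneg_ge0.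
congr (_ - _)%E; apply: eq_integral => x _.
  by rewrite !funeposE epos_mul // dens_ge0.
by rewrite !funenegE eneg_mul // dens_ge0.
Qed.


Lemma pos_cases {R : realType} (a : R) :
  (0 <= a /\ pospart a = a) \/ (a < 0 /\ pospart a = 0).
Proof.
rewrite /pospart; have [a0|a0] := leP 0 a.
  by left; split => //; apply: max_l.
by right; split => //; apply: max_r; exact: ltW.
Qed.

Lemma pos_lip {R : realType} (a b : R) : `|pospart a - pospart b| <= `|a - b|.
Proof.
have h1 := ler_norm (a - b); have h2 : b - a <= `|a - b| by rewrite distrC ler_norm.
rewrite ler_norml.
case: (pos_cases a) => -[? ->]; case: (pos_cases b) => -[? ->]; apply/andP; split; lra.
Qed.


Lemma iext {d} {Omega : measurableType d} {R : realType} {P : probability Omega R}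
  {f g : Omega -> R} : P.-integrable setT (EFin \o f) -> (forall w, f w = g w) ->
  P.-integrable setT (EFin \o g).
Proof. by move=> hf fg; apply: (eq_integrable measurableT _ _ _ hf) => x _ /=; rewrite fg. Qed.

Lemma iLin {d} {Omega : measurableType d} {R : realType} {P : probability Omega R}
  {f g : Omega -> R} (a b : R) :
  P.-integrable setT (EFin \o f) -> P.-integrable setT (EFin \o g) ->
  P.-integrable setT (EFin \o (fun w => a * f w + b * g w)).
Proof.
move=> hf hg.
have := integrableD measurableT (integrableZl measurableT a hf) (integrableZl measurableT b hg).
by apply: (eq_integrable measurableT) => x _ /=; rewrite EFinD !EFinM.
Qed.

Lemma iC {d} {Omega : measurableType d} {R : realType} (P : probability Omega R)
  (k : R) : P.-integrable setT (EFin \o (fun _ : Omega => k)).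
Proof. exact: finite_measure_integrable_cst. Qed.

Lemma iI {d} {Omega : measurableType d} {R : realType} (P : probability Omega R)
  (A : set Omega) : measurable A -> P.-integrable setT (EFin \o \1_A).
Proof. exact: integrable_indic. Qed.

Lemma iP {d} {Omega : measurableType d} {R : realType} {P : probability Omega R}
  {f : Omega -> R} : P.-integrable setT (EFin \o f) ->
  P.-integrable setT (EFin \o (fun w => pospart (f w))).
Proof. exact: (integrable_funrpos measurableT). Qed.

Lemma iN {d} {Omega : measurableType d} {R : realType} {P : probability Omega R}
  {f : Omega -> R} : P.-integrable setT (EFin \o f) ->
  P.-integrable setT (EFin \o (fun w => `|f w|)).
Proof. exact: integrable_norm. Qed.

Lemma RE {d} {Omega : measurableType d} {R : realType} {P : probability Omega R}
  {f : Omega -> R} : P.-integrable setT (EFin \o f) ->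
  (\int[P]_x (f x)%:E = (Rintegral P setT f)%:E)%E.
Proof. by move=> hf; rewrite fineK // integrable_fin_num. Qed.

Lemma iZ {d} {Omega : measurableType d} {R : realType} {P : probability Omega R}
  {f : Omega -> R} (k : R) : P.-integrable setT (EFin \o f) ->
  P.-integrable setT (EFin \o (fun w => k * f w)).
Proof. by move=> hf; apply: (iext (iLin k 0 hf hf)) => w; ring. Qed.

Definition hfun {R : realType} {Omega : Type} (Y : Omega -> R) (beta v : R)
  (w : Omega) : R := pospart (Y w - v) - (1 + beta) * pospart (v - Y w).

Lemma iYv {d} {Omega : measurableType d} {R : realType} {P : probability Omega R}
  {Y : Omega -> R} (v : R) : P.-integrable setT (EFin \o Y) ->
  P.-integrable setT (EFin \o (fun w => pospart (Y w - v))) /\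
  P.-integrable setT (EFin \o (fun w => pospart (v - Y w))).
Proof.
move=> iY; split; apply: iP.
  by apply: (iext (iLin 1 (- v) iY (iC P 1))) => w; ring.
by apply: (iext (iLin (-1) v iY (iC P 1))) => w; ring.
Qed.

Lemma ihfun {d} {Omega : measurableType d} {R : realType} {P : probability Omega R}
  (Y : Omega -> R) (beta v : R) : P.-integrable setT (EFin \o Y) ->
  P.-integrable setT (EFin \o hfun Y beta v).
Proof.
move=> iY; have [i1 i2] := iYv v iY.
by apply: (iext (iLin 1 (- (1 + beta)) i1 i2)) => w; rewrite /hfun; ring.
Qed.

Lemma Rhfun {d} {Omega : measurableType d} {R : realType} {P : probability Omega R}
  (Y : Omega -> R) (beta v : R) : P.-integrable setT (EFin \o Y) ->
  Rintegral P setT (hfun Y beta v) =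
  Rintegral P setT (fun w => pospart (Y w - v)) -
  (1 + beta) * Rintegral P setT (fun w => pospart (v - Y w)).
Proof.
move=> iY; have [i1 i2] := iYv v iY.
rewrite /hfun RintegralB //; last exact: iZ.
by rewrite RintegralZl.
Qed.

Lemma is_Ebeta_iff {d} {Omega : measurableType d} {R : realType} {P : probability Omega R}
  (Y : Omega -> R) (beta v : R) : P.-integrable setT (EFin \o Y) ->
  is_Ebeta P Y beta v <-> Rintegral P setT (hfun Y beta v) = 0.
Proof.
move=> iY; have [i1 i2] := iYv v iY.
rewrite /is_Ebeta Rhfun // (RE i1) (RE i2) -EFinM.
split => H.
  by case: H => ->; rewrite subrr.
by congr (EFin _); apply/eqP; rewrite -subr_eq0; apply/eqP.
Qed.

Lemma hfun_lip {R : realType} (beta y s t : R) : 0 <= beta ->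
  `|(pospart (y - s) - (1 + beta) * pospart (s - y)) -
    (pospart (y - t) - (1 + beta) * pospart (t - y))| <= (2 + beta) * `|s - t|.
Proof.
move=> b0.
have e : (pospart (y - s) - (1 + beta) * pospart (s - y)) -
    (pospart (y - t) - (1 + beta) * pospart (t - y)) =
    (pospart (y - s) - pospart (y - t)) - (1 + beta) * (pospart (s - y) - pospart (t - y)).
  by ring.
rewrite e; apply: le_trans (ler_normB _ _) _.
rewrite normrM (ger0_norm (_ : 0 <= 1 + beta)); last by rewrite addr_ge0.
have h1 := pos_lip (y - s) (y - t); have h2 := pos_lip (s - y) (t - y).
have e1 : y - s - (y - t) = - (s - t) by ring.
have e2 : s - y - (t - y) = s - t by ring.
rewrite e1 normrN in h1; rewrite e2 in h2.
have : (1 + beta) * `|pospart (s - y) - pospart (t - y)| <= (1 + beta) * `|s - t|.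
  by rewrite ler_wpM2l // addr_ge0.
nra.
Qed.


Lemma Ebeta_exists {d} {Omega : measurableType d} {R : realType} (P : probability Omega R)
  (Y : Omega -> R) (beta : R) : 0 <= beta -> P.-integrable setT (EFin \o Y) ->
  exists v, is_Ebeta P Y beta v.
Proof.
move=> b0 iY.
pose F v := Rintegral P setT (hfun Y beta v).
have P1 : fine (P setT) = 1 by rewrite probability_setT.
have k0 : 0 < 2 + beta by lra.
have Lip s t : `|F s - F t| <= (2 + beta) * `|s - t|.
  have ist := ihfun Y beta s iY; have itt := ihfun Y beta t iY.
  have iB : P.-integrable setT (EFin \o (fun w => hfun Y beta s w - hfun Y beta t w)).
    by apply: (iext (iLin 1 (-1) ist itt)) => w; ring.
  have -> : F s - F t = Rintegral P setT (fun w => hfun Y beta s w - hfun Y beta t w) by rewrite RintegralB.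
  apply: le_trans (le_normr_Rintegral measurableT iB) _.
  have H2 : Rintegral P setT (fun w => `|hfun Y beta s w - hfun Y beta t w|) <=
      Rintegral P setT (fun _ => (2 + beta) * `|s - t|).
    apply: le_Rintegral => //; [exact: (iN iB)|exact: iC|].
    by move=> w _; exact: hfun_lip.
  apply: le_trans H2 _.
  by rewrite Rintegral_cst // P1 mulr1.
have cF : continuous (F : R -> R).
  move=> x; apply/cvgrPdist_lt => e e0.
  near=> t.
  apply: le_lt_trans (Lip x t) _.
  apply: lt_le_trans (_ : _ < (2 + beta) * (e / (2 + beta))) _; last first.
    by rewrite mulrC divfK // gt_eqF.
  rewrite ltr_pM2l //.
  near: t.
  exists (e / (2 + beta)); first by rewrite /= divr_gt0.
  by move=> t /=.
pose m := Rintegral P setT (fun w => `|Y w|).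
pose EY := Rintegral P setT Y.
have m0 : 0 <= m by apply: Rintegral_ge0 => w _.
have hEY : F EY <= 0.
  have i1 : P.-integrable setT (EFin \o (fun w => Y w - EY)).
    by apply: (iext (iLin 1 (- EY) iY (iC P 1))) => w; ring.
  apply: le_trans (_ : Rintegral P setT (fun w => Y w - EY) <= 0).
    apply: le_Rintegral => //; first exact: ihfun.
    move=> w _; rewrite /hfun.
    case: (pos_cases (Y w - EY)) => -[? ->]; case: (pos_cases (EY - Y w)) => -[? ->]; nra.
  by rewrite RintegralB //; [rewrite Rintegral_cst // P1 mulr1 subrr | exact: iC].
pose v0 := - ((2 + beta) * m).
have hv0 : 0 <= F v0.
  have iN1 := iN iY.
  have i1 : P.-integrable setT (EFin \o (fun w => - v0 - (2 + beta) * `|Y w|)).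
    by apply: (iext (iLin (- v0) (- (2 + beta)) (iC P 1) iN1)) => w; ring.
  apply: le_trans (_ : 0 <= Rintegral P setT (fun w => - v0 - (2 + beta) * `|Y w|)) _.
    rewrite RintegralB //; [|exact: iC|exact: iZ].
    by rewrite Rintegral_cst // P1 mulr1 RintegralZl // /v0 opprK subrr.
  apply: le_Rintegral => //; first exact: ihfun.
  move=> w _; rewrite /hfun.
  have n1 := ler_norm (Y w); have n2 : - Y w <= `|Y w| by rewrite -normrN ler_norm.
  have v00 : v0 <= 0 by rewrite /v0 oppr_le0 mulr_ge0 // ltW.
  case: (pos_cases (Y w - v0)) => -[? ->]; case: (pos_cases (v0 - Y w)) => -[? ->]; nra.
have v0EY : v0 <= EY.
  have := le_normr_Rintegral measurableT iY; rewrite -/EY -/m => h.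
  have : - m <= EY by move: h; rewrite ler_norml => /andP[].
  rewrite /v0; nra.
have bnd : Num.min (F v0) (F EY) <= 0 <= Num.max (F v0) (F EY).
  by rewrite ge_min le_max hEY hv0 !orbT.
have [c _ Fc] := @IVT R F v0 EY 0 v0EY (continuous_subspaceT cF) bnd.
by exists c; apply/is_Ebeta_iff.
Unshelve. all: by end_near.
Qed.


Lemma main_D {d} {Omega : measurableType d} {R : realType} (P : probability Omega R)
  (Y : Omega -> R) (beta v : R) (D : set Omega) : 0 <= beta ->
  measurable_fun setT Y -> P.-integrable setT (EFin \o Y) ->
  Rintegral P setT (hfun Y beta v) = 0 -> measurable D ->
  P.-integrable setT (EFin \o (fun w => Y w * dens P beta D w)) /\
  v <= Rintegral P setT (fun w => Y w * dens P beta D w) /\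
  (D = [set w | Y w < v] -> Rintegral P setT (fun w => Y w * dens P beta D w) = v).
Proof.
move=> b0 mY iY H0 mD.
set p := fine (P D).
have p0 : 0 <= p by apply: fine_ge0; exact: measure_ge0.
have K0 : 0 < 1 + beta * p by nra.
set c := (1 + beta * p)^-1.
have c0 : 0 <= c by rewrite invr_ge0 ltW.
have c1 : c <= 1 by rewrite invf_le1 //; nra.
have densE w : dens P beta D w = c * (1 + beta * \1_D w).
  rewrite /dens -/p -/c mulrC; congr (_ * _).
  by rewrite !indicE in_setC; case: (w \in D) => /=; lra.
have ind w : (\1_D w : R) = 0 \/ (\1_D w : R) = 1.
  by rewrite !indicE; case: (w \in D); [right|left].
have dle w : 0 <= dens P beta D w <= 1 + beta.
  rewrite densE; case: (ind w) => ->; apply/andP; split; nra.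
have mdens : measurable_fun setT (dens P beta D).
  rewrite /dens; apply: measurable_funM; [|exact: measurable_cst].
  apply: measurable_funD; first by apply: measurable_indic; exact: measurableC.
  apply: measurable_funM; first exact: measurable_cst.
  exact: measurable_indic.
have iYd : P.-integrable setT (EFin \o (fun w => Y w * dens P beta D w)).
  apply: (le_integrable measurableT _ _ (iZ (1 + beta) (iN iY))).
    by apply/measurable_EFinP; exact: measurable_funM.
  move=> w _ /=; rewrite lee_fin normrM.
  have /andP[d0 d1] := dle w.
  rewrite (ger0_norm d0) [X in _ <= X]ger0_norm; last by rewrite mulr_ge0 // addr_ge0.
  by rewrite mulrC ler_wpM2r.
pose G w := c * v * 1 + (c * v * beta * \1_D w + c * hfun Y beta v w).
have iG : P.-integrable setT (EFin \o G).
  have ih := ihfun Y beta v iY.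
  have i2 := iLin (c * v * beta) c (iI P D mD) ih.
  by apply: (iext (iLin (c * v) 1 (iC P 1) i2)) => w; rewrite /G /=; ring.
have RG : Rintegral P setT G = v.
  have ih := ihfun Y beta v iY.
  have i1D := iI P D mD.
  rewrite /G RintegralD //; [|exact: iC|exact: (iLin (c * v * beta) c i1D ih)].
  rewrite RintegralD //; [|exact: (iZ (c * v * beta) i1D)|exact: (iZ c ih)].
  rewrite (@RintegralZl _ _ _ P setT (\1_D) (c * v * beta) measurableT i1D).
  rewrite (@RintegralZl _ _ _ P setT (hfun Y beta v) c measurableT ih) H0 Rintegral_cst //.
  have P1 : fine (P setT) = 1 by rewrite probability_setT.
  rewrite P1.
  have -> : Rintegral P setT (\1_D) = p by rewrite /Rintegral integral_indic // setIT.
  rewrite /c; field; exact: lt0r_neq0.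
have Gle w : G w <= Y w * dens P beta D w.
  rewrite densE /G /hfun.
  have hq : 0 <= (Y w - v) * (1 + beta * \1_D w) - (pospart (Y w - v) - (1 + beta) * pospart (v - Y w)).
    case: (ind w) => ->;
    case: (pos_cases (Y w - v)) => -[? ->]; case: (pos_cases (v - Y w)) => -[? ->]; nra.
  have := mulr_ge0 c0 hq; nra.
split => //; split.
  rewrite -RG; apply: le_Rintegral => //.
  by move=> w _; exact: Gle.
move=> DXe; rewrite -RG; apply: eq_Rintegral => w _.
apply/eqP; rewrite eq_le Gle andbT.
rewrite densE /G /hfun.
have hq : (Y w - v) * (1 + beta * \1_D w) - (pospart (Y w - v) - (1 + beta) * pospart (v - Y w)) = 0.
  rewrite indicE; have [wD|wD] := boolP (w \in D); rewrite /=; move: wD; rewrite DXe ?in_setE /=.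
    move=> hY.
    by case: (pos_cases (Y w - v)) => -[? ->]; case: (pos_cases (v - Y w)) => -[? ->]; nra.
  rewrite notin_setE /= => /negP; rewrite -leNgt => hY.
  by case: (pos_cases (Y w - v)) => -[? ->]; case: (pos_cases (v - Y w)) => -[? ->]; nra.
have : c * ((Y w - v) * (1 + beta * \1_D w) - (pospart (Y w - v) - (1 + beta) * pospart (v - Y w))) = 0.
  by rewrite hq mulr0.
nra.
Qed.


Theorem theorem3 (d : measure_display) (Omega : measurableType d) (R : realType)
  (P : probability Omega R)
  (dX : measure_display) (Xsp : measurableType dX) (X : Omega -> Xsp) (u : Xsp -> R)
  (beta : R) :
  measurable_fun setT X -> measurable_fun setT u ->
  P.-integrable setT (fun w => (u (X w))%:E) ->
  0 <= beta ->
  let v := Ebeta P (fun w => u (X w)) beta in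
  let DX := [set w | u (X w) < v] in
  (forall Q, Q \in Qbeta P beta -> (v%:E <= \int[Q]_w (u (X w))%:E)%E) /\
  (exists Qstar : {measure set Omega -> \bar R},
      Qstar \in Qbeta P beta /\
      has_density P Qstar (dens P beta DX) /\
      (\int[Qstar]_w (u (X w))%:E = v%:E)%E).
Proof.
move=> mX mu iY0 b0 v DX.
pose Y := fun w => u (X w).
have mY : measurable_fun setT Y by exact: measurableT_comp.
have iY : P.-integrable setT (EFin \o Y) by exact: iY0.
have Hv : is_Ebeta P Y beta v.
  rewrite /v /Ebeta; have [v1 Hv1] := Ebeta_exists P Y beta b0 iY.
  by have := @xgetPex _ 0 [set v | is_Ebeta P Y beta v] (ex_intro _ v1 Hv1).
have H0 : Rintegral P setT (hfun Y beta v) = 0 by apply/is_Ebeta_iff.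
have mDX : measurable DX.
  have := mY measurableT _ (@measurable_itv _ `]-oo, v[); rewrite setTI.
  congr measurable; apply/seteqP; split => w /=; rewrite in_itv /=; by [].
split.
  move=> Q; rewrite inE => -[QP [D [mD hD]]].
  have [iYd [le _]] := main_D P Y beta v D b0 mY iY H0 mD.
  rewrite (@dens_changeY _ _ _ P beta D mD Q Y b0 hD mY) (RE iYd) lee_fin; exact: le.
have [iYd [_ eq]] := main_D P Y beta v DX b0 mY iY H0 mDX.
exists (Mdens P mDX b0); split.
  rewrite inE; split; first exact: Mdens_ac.
  by exists DX; split => //; exact: Mdens_density.
split; first exact: Mdens_density.
rewrite (@dens_changeY _ _ _ P beta DX mDX _ Y b0 (Mdens_density P mDX b0) mY) (RE iYd) eq //.
Qed.
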